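(* Let $G$ be a finite nonabelian simple group, $G\le S_n$ a faithful permutation representation of minimum degree, $k\ge1$, and $\Omega=\overline G^k\subseteq\{0,1\}^{kn^2}$. Let $Q=\{(g_1,\dots,g_{2k})\in G^{2k}:g_1=g_{2k}=1\}$, acting on the variables by $M_{i,a,b}\mapsto M_{i,g_{2i-1}(a),g_{2i}(b)}$ (so $M_i\mapsto\overline{g_{2i-1}}M_i\overline{g_{2i}}^{-1}$). Let $H\le K\le Q$, and let $S$ be the edge set of a connected component of the graph $([k],E(H)\cap E(K))$. Let $r\in\mathbb N$, and for each $i\in[r]$ let $H_i\le L_i\le Q$ with $L_i\in\mathcal N_{Q,\Omega}$. Suppose $H_1\cap\dots\cap H_r=H$ and $L_1\cap\dots\cap L_r\le K$. Then there exists $i\in[r]$ with $S\subseteq E(H_i)\cap E(L_i)$.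
   Context: $\overline G$ is the set of permutation matrices of elements of $G$. For $f$ on $\Omega$, $\mathrm{Stab}_Q(f)=\{\pi\in Q:f(\pi x)=f(x)\ \forall x\in\Omega\}$, and $\mathcal N_{Q,\Omega}$ is the set of $\mathrm{Stab}_Q(f)$ for $f:\Omega\to\mathbb N$. For $H\le G^{2k}$ and $S'\subseteq[2k]$, $H{\upharpoonright}_{S'}=\{(h_j)_{j\in S'}: h\in H,\ h_j=1\ \forall j\notin S'\}$. $\mathrm{Diag}(G^{\{2i,2i+1\}})=\{(g,g):g\in G\}$. $E(H)=\{\{i,i+1\}: i\in[k-1],\ H{\upharpoonright}_{\{2i,2i+1\}}=\mathrm{Diag}(G^{\{2i,2i+1\}})\}$ is viewed as an edge set on vertex set $[k]$. *)

(* Defs.v *)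
From HB Require Import structures.
From mathcomp Require Import all_boot all_order all_fingroup all_solvable.
Set Implicit Arguments. Unset Strict Implicit. Unset Printing Implicit Defensive.

Local Open Scope group_scope.

(* Coordinates of G^{2k}: indices 0..2k-1 (0-based; paper index j+1). *)
Notation coordT k n := {ffun 'I_(2 * k) -> {perm 'I_n}}.
(* Points of {0,1}^{k n^2}: variable M_{i,a,b} (0-based i,a,b). *)
Notation pointT k n := {ffun 'I_k * 'I_n * 'I_n -> bool}.

(* the m-th coordinate (0-based) of g, or 1 if m is out of range *)
Definition coord k n (g : coordT k n) (m : nat) : {perm 'I_n} :=
  if insub m is Some j then g j else 1.

Definition permb n (g : {perm 'I_n}) (a b : 'I_n) : bool := g a == b.

Definition Omega k n (G : {set {perm 'I_n}}) : {set pointT k n} :=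
  [set x : pointT k n | [forall i : 'I_k, [exists g in G,
     [forall a : 'I_n, forall b : 'I_n, x (i, a, b) == permb g a b]]]].
Arguments Omega : clear implicits.

Definition Qset k n (G : {set {perm 'I_n}}) : {set coordT k n} :=
  [set g : coordT k n | [forall j, g j \in G] && (coord g 0 == 1)
                        && (coord g (2 * k)%N.-1 == 1)].
Arguments Qset : clear implicits.

(* action on points: M_{i,a,b} |-> M_{i, g_{2i-1}(a), g_{2i}(b)} (1-based) *)
Definition qact k n (g : coordT k n) (x : pointT k n) : pointT k n :=
  [ffun t : 'I_k * 'I_n * 'I_n => x (t.1.1, coord g (2 * t.1.1)%N t.1.2, coord g (2 * t.1.1)%N.+1 t.2)].

Definition Stab k n (G : {set {perm 'I_n}}) (f : pointT k n -> nat)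
  : {set coordT k n} :=
  [set g in Qset k n G | [forall x in Omega k n G, f (qact g x) == f x]].
Arguments Stab : clear implicits.

Definition in_NQ k n (G : {set {perm 'I_n}}) (L : {set coordT k n}) : Prop :=
  exists f : pointT k n -> nat, L = Stab k n G f.

Definition cmul k n (g h : coordT k n) : coordT k n := [ffun j => g j * h j].
Definition cone k n : coordT k n := [ffun _ => 1].
Arguments cone : clear implicits.
Definition is_subgroup k n (A : {set coordT k n}) : bool :=
  (cone k n \in A) && [forall g in A, forall h in A, cmul g h \in A].

Definition restr2 k n (H : {set coordT k n}) (a b : nat)
  : {set {perm 'I_n} * {perm 'I_n}} :=
  [set (coord h a, coord h b) | h in H &
     [forall j : 'I_(2 * k), ((val j != a) && (val j != b)) ==> (h j == 1)]].

Definition diag2 n (G : {set {perm 'I_n}}) : {set {perm 'I_n} * {perm 'I_n}} :=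
  [set (g, g) | g in G].

(* E(H): edges {i, i+1} (vertices 0-based in 'I_k); the paper's (1-based)
   coordinates 2i, 2i+1 are 0-based 2i+1, 2i+2 for 0-based vertex i. *)
Definition Eset k n (G : {set {perm 'I_n}}) (H : {set coordT k n})
  : {set {set 'I_k}} :=
  [set e : {set 'I_k} | [exists i : 'I_k, exists j : 'I_k,
     [&& e == [set i; j], val j == (val i).+1 &
         restr2 H (2 * i)%N.+1 (2 * i)%N.+2 == diag2 G]]].

Definition gadj k (E : {set {set 'I_k}}) : rel 'I_k := fun u w => [set u; w] \in E.

Definition component_edges k (E : {set {set 'I_k}}) (v : 'I_k)
  : {set {set 'I_k}} :=
  [set e in E | e \subset [set w | connect (gadj E) v w]].

(* Main.v *)
Require Import Defs.
From HB Require Import structures.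
From mathcomp Require Import all_boot all_order all_fingroup all_solvable.
From mathcomp Require Import zify.
Set Implicit Arguments. Unset Strict Implicit. Unset Printing Implicit Defensive.

Local Notation qact := Defs.qact.
Section Aux.
Variables (n k : nat) (G : {group {perm 'I_n}}).
Local Notation cT := (coordT k n).
Local Notation pT := (pointT k n).

Definition tp (a b : nat) (x y : {perm 'I_n}) : cT :=
  [ffun j : 'I_(2*k) => if val j == a then x else if val j == b then y else 1%g].
Definition del (c : nat) (x : {perm 'I_n}) : cT :=
  [ffun j : 'I_(2*k) => if val j == c then x else 1%g].

Lemma coord_val (g : cT) (j : 'I_(2*k)) : coord g (val j) = g j.
Proof. by rewrite /coord valK. Qed.

Lemma coord_tp a b x y m : a < 2*k -> b < 2*k -> a != b ->
  coord (tp a b x y) m = if m == a then x else if m == b then y else 1%g.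
Proof.
move=> ha hb hab; rewrite /coord; case: insubP => [j _ <-|]; first by rewrite ffunE.
rewrite -leqNgt => hm.
case: eqP => [E|_]; first lia.
case: eqP => [E|_] //; lia.
Qed.

Lemma coord_del c x m : c < 2*k ->
  coord (del c x) m = if m == c then x else 1%g.
Proof.
move=> hc; rewrite /coord; case: insubP => [j _ <-|]; first by rewrite ffunE.
rewrite -leqNgt => hm.
case: eqP => [E|_] //; lia.
Qed.

Lemma restr2P (H : {set cT}) a b x y : a < 2*k -> b < 2*k -> a != b ->
  ((x, y) \in restr2 H a b) = (tp a b x y \in H).
Proof.
move=> ha hb hab; apply/imsetP/idP.
- case=> h; rewrite inE => /andP [hH /forallP hs] [-> ->].
  suff -> : tp a b (coord h a) (coord h b) = h by [].
  apply/ffunP => j; rewrite ffunE.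
  case: eqP => [ja|ja]; first by rewrite -ja coord_val.
  case: eqP => [jb|jb]; first by rewrite -jb coord_val.
  move: (hs j); rewrite (introN eqP ja) (introN eqP jb) /= => /eqP ->.
  by [].
- move=> htp; exists (tp a b x y).
    rewrite inE htp /=. apply/forallP => j; apply/implyP => /andP [/negPf h1 /negPf h2].
    by rewrite ffunE h1 h2.
  have hba : (b == a) = false by rewrite eq_sym (negPf hab).
  by rewrite !coord_tp // hba !eqxx.
Qed.

Lemma restr2S (H H' : {set cT}) a b : a < 2*k -> b < 2*k -> a != b ->
  H \subset H' -> restr2 H a b \subset restr2 H' a b.
Proof.
move=> ha hb hab /subsetP s; apply/subsetP => -[x y].
rewrite !restr2P //; exact: s.
Qed.

Lemma cmul_tp a b x y x' y' :
  cmul (tp a b x y) (tp a b x' y') = tp a b (x * x')%g (y * y')%g.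
Proof.
apply/ffunP => j; rewrite !ffunE.
by case: eqP => _; [|case: eqP => _]; rewrite ?mulg1.
Qed.

Lemma cone_tp a b : cone k n = tp a b 1%g 1%g.
Proof. by apply/ffunP => j; rewrite !ffunE; case: ifP => //; case: ifP. Qed.

Lemma del_tp a b x : a != b -> del a x = tp a b x 1%g.
Proof. by move=> hab; apply/ffunP => j; rewrite !ffunE; case: ifP => //; case: ifP. Qed.

Lemma del_tp2 a b y : a != b -> del b y = tp a b 1%g y.
Proof.
move=> hab; apply/ffunP => j; rewrite !ffunE.
by case: (eqVneq (val j) a) => [->|_]; rewrite ?(negPf hab).
Qed.


Lemma OmegaP (x : pT) : x \in Omega k n G ->
  forall i : 'I_k, exists2 h, h \in G & forall a b, x (i, a, b) = permb h a b.
Proof.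
rewrite inE => /forallP hx i; case/existsP: (hx i) => h /andP [hG /forallP hh].
by exists h => // a b; apply/eqP; exact: (forallP (hh a) b).
Qed.

Lemma OmegaI (x : pT) : (forall i : 'I_k, exists2 h, h \in G & forall a b, x (i, a, b) = permb h a b) -> x \in Omega k n G.
Proof.
move=> hx; rewrite inE; apply/forallP => i; case: (hx i) => h hG hh.
apply/existsP; exists h; rewrite hG /=; apply/forallP => a; apply/forallP => b; by rewrite hh.
Qed.

Lemma qactE (g : cT) (x : pT) i a b : qact g x (i, a, b) = x (i, coord g (2 * i) a, coord g (2 * i).+1 b).
Proof. by rewrite ffunE. Qed.

Lemma coordG (g : cT) m : (forall j, g j \in G) -> coord g m \in G.
Proof. by move=> hg; rewrite /coord; case: (insub m) => [j|] //; rewrite group1. Qed.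

Lemma qact_Omega (g : cT) x : (forall j, g j \in G) -> x \in Omega k n G -> qact g x \in Omega k n G.
Proof.
move=> hg /OmegaP hx; apply: OmegaI => i; case: (hx i) => h hG hh.
exists (coord g (2 * i) * h * (coord g (2 * i).+1)^-1)%g; first by rewrite !groupM ?groupV // coordG.
move=> a b; rewrite qactE hh /permb !permM.
by apply/eqP/eqP => [->|<-]; rewrite ?permK ?permKV.
Qed.

Lemma del_Q c x : 0 < c -> c < (2*k).-1 -> x \in G -> del c x \in Qset k n G.
Proof.
move=> h0 h1 hx; rewrite inE; apply/andP; split; first (apply/andP; split).
- apply/forallP => j; rewrite ffunE; case: ifP => // _; exact: group1.
- rewrite coord_del; last (move: h1; rewrite -subn1; lia). by rewrite ifN; last lia.
- rewrite coord_del; last (move: h1; rewrite -subn1; lia).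
  by rewrite ifN; last (move: h1; rewrite -subn1; lia).
Qed.

Lemma StabP f (g : cT) : reflect (g \in Qset k n G /\ forall x, x \in Omega k n G -> f (qact g x) = f x) (g \in Stab k n G f).
Proof.
have -> : (g \in Stab k n G f) = (g \in Qset k n G) && [forall x in Omega k n G, f (qact g x) == f x].
  by rewrite /Stab !inE.
apply: (iffP andP) => [[hq /forall_inP h]|[hq h]]; split => //.
  by move=> x /h /eqP.
by apply/forall_inP => x /h ->.
Qed.

Definition freeV (f : pT -> nat) (j : nat) := forall x y, x \in Omega k n G -> y \in Omega k n G ->
  (forall (i : 'I_k) a b, val i != j -> x (i, a, b) = y (i, a, b)) -> f x = f y.

Lemma free_del f j c x : freeV f j -> (c == 2 * j) || (c == (2 * j).+1) -> 0 < c -> c < (2*k).-1 ->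
  x \in G -> del c x \in Stab k n G f.
Proof.
move=> hf hc c0 c1 hx; apply/StabP; split; first exact: del_Q.
move=> y hy; apply: hf => //.
  apply: qact_Omega => // i; rewrite ffunE; case: ifP => // _; exact: group1.
have c2 : c < 2 * k by move: c1; rewrite -subn1; lia.
move=> i a b hij; rewrite qactE !coord_del; try lia.
have hij' : (i : nat) != j := hij.
rewrite ifN; last by move/orP: hc => [] /eqP; lia.
rewrite ifN; last by move/orP: hc => [] /eqP; lia.
by rewrite !perm1.
Qed.

Lemma del_free_odd f (j : 'I_k) : (forall x, x \in G -> del (2 * j).+1 x \in Stab k n G f) -> freeV f j.
Proof.
move=> hd x y hx hy hxy.
case: (OmegaP hx j) => h hG hh; case: (OmegaP hy j) => h' hG' hh'.
have gG : (h'^-1 * h)%g \in G by rewrite groupM ?groupV.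
case/StabP: (hd _ gG) => _ /(_ x hx) <-; congr f.
have jk := ltn_ord j.
apply/ffunP => -[[i a] b]; rewrite qactE !coord_del; try lia.
case: (eqVneq i j) => [->|hij].
- rewrite ifN; last lia.
  rewrite eqxx perm1 hh hh' /permb permM (inj_eq (@perm_inj _ h)).
  by apply/eqP/eqP => [->|<-]; rewrite ?permK ?permKV.
- have hij' : (i : nat) != (j : nat) := hij.
  rewrite ifN; last lia. rewrite ifN; last lia.
  by rewrite !perm1 hxy.
Qed.

Lemma del_free_even f (j : 'I_k) : (forall x, x \in G -> del (2 * j) x \in Stab k n G f) -> freeV f j.
Proof.
move=> hd x y hx hy hxy.
case: (OmegaP hx j) => h hG hh; case: (OmegaP hy j) => h' hG' hh'.
have gG : (h' * h^-1)%g \in G by rewrite groupM ?groupV.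
case/StabP: (hd _ gG) => _ /(_ x hx) <-; congr f.
have jk := ltn_ord j.
apply/ffunP => -[[i a] b]; rewrite qactE !coord_del; try lia.
case: (eqVneq i j) => [->|hij].
- rewrite eqxx ifN; last lia.
  by rewrite perm1 hh hh' /permb permM permKV.
- have hij' : (i : nat) != (j : nat) := hij.
  rewrite ifN; last lia. rewrite ifN; last lia.
  by rewrite !perm1 hxy.
Qed.

Lemma diag2_mem x : x \in G -> (x, x) \in diag2 G.
Proof. by move=> hx; apply: imset_f. Qed.

Lemma free_noE f (p : nat) j x : p.+1 < k -> (j == p) || (j == p.+1) -> freeV f j -> x \in G -> x != 1%g ->
  restr2 (Stab k n G f) (2 * p).+1 (2 * p).+2 != diag2 G.
Proof.
move=> hp hj hf hx x1.
have hin : (x, 1%g) \in restr2 (Stab k n G f) (2 * p).+1 (2 * p).+2 \/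
           (1%g, x) \in restr2 (Stab k n G f) (2 * p).+1 (2 * p).+2.
  case/orP: hj => /eqP hj; subst j.
  - left; rewrite restr2P; try lia. rewrite -del_tp; last lia.
    apply: free_del hf _ _ _ hx; lia.
  - right; rewrite restr2P; try lia. rewrite -del_tp2; last lia.
    apply: free_del hf _ _ _ hx; lia.
apply/eqP => E; rewrite E in hin.
by case: hin => /imsetP [z _ [e1 e2]]; move: x1; rewrite e1 e2 eqxx.
Qed.

Lemma twoS (m : nat) : 2 * m.+1 = (2 * m).+2.
Proof. lia. Qed.

Lemma transfer (H : {set cT}) f (p : 'I_k) (hp : p.+1 < k) : simple G ->
  restr2 H (2 * p).+1 (2 * p).+2 = diag2 G -> H \subset Stab k n G f ->
  is_subgroup (Stab k n G f) ->
  restr2 (Stab k n G f) (2 * p).+1 (2 * p).+2 != diag2 G ->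
  freeV f p /\ freeV f p.+1.
Proof.
move=> Gs hH HL hsub hne.
set L := Stab k n G f in HL hsub hne *.
set a := (2 * p).+1 in hH hne *; set b := (2 * p).+2 in hH hne *.
have ha : a < 2 * k by rewrite /a; lia.
have hb : b < 2 * k by rewrite /b; lia.
have hab : a != b by rewrite /a /b; lia.
have hba : (b == a) = false by rewrite eq_sym (negPf hab).
case/andP: hsub => L1 /forall_inP LM'.
have LM u v : u \in L -> v \in L -> cmul u v \in L.
  by move=> uL vL; move: (LM' u uL) => /forall_inP /(_ v vL).
have diagL g : g \in G -> tp a b g g \in L.
  by move=> gG; apply: (subsetP HL); rewrite -restr2P // hH diag2_mem.
have LQ u : u \in L -> forall j, u j \in G.
  by case/StabP => /[swap] _; rewrite inE => /andP [/andP [/forallP h _] _].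
move: hne; rewrite eqEsubset negb_and => /orP [/subsetPn [[x y] hxy hnd] | /negP []]; last first.
  by rewrite -hH; apply: restr2S.
rewrite restr2P // in hxy.
have xG : x \in G by move: (LQ _ hxy (Ordinal ha)); rewrite ffunE /= eqxx.
have yG : y \in G by move: (LQ _ hxy (Ordinal hb)); rewrite ffunE /= hba eqxx.
have xy : x != y by apply: contra hnd => /eqP <-; exact: diag2_mem.
pose c := (x * y^-1)%g.
have cL : tp a b c 1%g \in L.
  by have := LM _ _ hxy (diagL _ (groupVr yG)); rewrite cmul_tp mulgV.
have c1 : c != 1%g.
  apply: contra xy => /eqP E; apply/eqP.
  by move/(congr1 (fun z => (z * y)%g)): E; rewrite mulgKV mul1g.
pose Ns := [set z in G | tp a b z 1%g \in L].
have gsN : group_set Ns.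
  apply/group_setP; split; first by apply/setIdP; rewrite group1 -cone_tp.
  move=> u v /setIdP [uG uL] /setIdP [vG vL].
  apply/setIdP; split; first exact: groupM. have := LM _ _ uL vL; by rewrite cmul_tp mulg1.
pose NG := Group gsN.
have NJ z g : z \in Ns -> g \in G -> (z ^ g)%g \in Ns.
  move=> /setIdP [zG zL] gG; apply/setIdP; split; first exact: groupJ.
  have := LM _ _ (diagL _ (groupVr gG)) (LM _ _ zL (diagL _ gG)).
  by rewrite !cmul_tp mul1g mulVg conjgE.
have nNG : (NG <| G)%g.
  apply/andP; split.
    by apply/subsetP => z /setIdP [].
  apply/subsetP => g gG; rewrite inE; apply/subsetP => w; rewrite mem_conjg => hw.
  by rewrite -(conjgKV g w); apply: NJ.
have allN g : g \in G -> tp a b g 1%g \in L.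
  case/simpleP: Gs => _ /(_ NG nNG) hNG.
  have cN : c \in NG by apply/setIdP; rewrite groupM ?groupV.
  case: hNG => E.
    by move: cN; rewrite E => /set1gP hc; move: c1; rewrite hc eqxx.
  move=> gG; have : g \in NG by rewrite E.
  by case/setIdP.
split.
  apply: del_free_odd => g gG; rewrite (del_tp (b := b)) //; exact: allN.
apply: (@del_free_even f (Ordinal hp)) => g gG.
change (del (2 * p.+1) g \in L).
rewrite twoS (del_tp2 (a := a)) //.
have := LM _ _ (allN _ (groupVr gG)) (diagL _ gG).
by rewrite cmul_tp mulVg mul1g.
Qed.

Lemma bnds (p : nat) : p.+1 < k -> [/\ (2 * p).+1 < 2 * k, (2 * p).+2 < 2 * k,
  (2 * p).+1 != (2 * p).+2, 0 < (2 * p).+1 & (2 * p).+1 < (2 * k).-1].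
Proof. move=> h; split; lia. Qed.

Lemma EsetP (H : {set cT}) e : e \in Eset G H -> exists p q : 'I_k,
  [/\ e = [set p; q], nat_of_ord q = p.+1 & restr2 H (2 * p).+1 (2 * p).+2 = diag2 G].
Proof.
rewrite inE => /existsP [i /existsP [j /and3P [/eqP -> /eqP hj /eqP hr]]].
by exists i, j.
Qed.

Lemma mkE (H : {set cT}) (p q : 'I_k) : nat_of_ord q = p.+1 ->
  restr2 H (2 * p).+1 (2 * p).+2 = diag2 G -> [set p; q] \in Eset G H.
Proof.
move=> hq hr; rewrite inE; apply/existsP; exists p; apply/existsP; exists q.
by apply/and3P; split => //; apply/eqP.
Qed.

Lemma Eset_uniq (H : {set cT}) (p q : 'I_k) : nat_of_ord q = p.+1 -> [set p; q] \in Eset G H ->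
  restr2 H (2 * p).+1 (2 * p).+2 = diag2 G.
Proof.
move=> hq /EsetP [i [j [E hj hr]]].
have : i \in [set p; q] by rewrite E set21.
have : j \in [set p; q] by rewrite E set22.
rewrite !inE => /orP [/eqP jp | /eqP jq] /orP [/eqP ip | /eqP iq].
- by exfalso; move: hj; rewrite jp ip; lia.
- by exfalso; move: hj hq; rewrite jp iq; lia.
- by rewrite -ip.
- by exfalso; move: hj; rewrite jq iq; lia.
Qed.

Lemma propag (H K : {set cT}) f x : simple G -> x \in G -> x != 1%g ->
  H \subset Stab k n G f -> is_subgroup (Stab k n G f) ->
  forall u w : 'I_k, freeV f u -> connect (gadj (Eset G H :&: Eset G K)) u w -> freeV f w.
Proof.
move=> Gs xG x1 HL hsub u w hu /connectP [s pth ->] {w}.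
elim: s u pth hu => [|z s IH] u //= /andP [huz pth] hu.
apply: IH pth _.
move: huz; rewrite /gadj inE => /andP [/EsetP [p [q [E hq hr]]] _].
have hpk : p.+1 < k by rewrite -hq ltn_ord.
have uin : u \in [set p; q] by rewrite -E set21.
have zin : z \in [set p; q] by rewrite -E set22.
have hne : restr2 (Stab k n G f) (2 * p).+1 (2 * p).+2 != diag2 G.
  apply: (free_noE (j := u)) hpk _ hu xG x1.
  move: uin; rewrite !inE => /orP [/eqP -> | /eqP ->]; [by rewrite eqxx | by rewrite hq eqxx orbT].
have [fp fq] := transfer hpk Gs hr HL hsub hne.
by move: zin; rewrite !inE => /orP [/eqP -> | /eqP ->] //; rewrite hq.
Qed.

End Aux.

Theorem lemma6p10 (n k : nat) (G : {group {perm 'I_n}})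
  (Gsimple : simple G) (Gnonab : ~~ abelian G)
  (Gmindeg : forall (m : nat) (P : {group {perm 'I_m}}), G \isog P -> n <= m)
  (hk : 0 < k)
  (H K : {set coordT k n})
  (subH : is_subgroup H) (subK : is_subgroup K)
  (HK : H \subset K) (KQ : K \subset Qset k n G)
  (S : {set {set 'I_k}})
  (hS : exists v : 'I_k, S = component_edges (Eset G H :&: Eset G K) v)
  (r : nat) (hr : 0 < r) (Hs Ls : 'I_r -> {set coordT k n})
  (subHs : forall i, is_subgroup (Hs i)) (subLs : forall i, is_subgroup (Ls i))
  (HLs : forall i, Hs i \subset Ls i) (LQ : forall i, Ls i \subset Qset k n G)
  (LN : forall i, in_NQ G (Ls i))
  (capH : \bigcap_(i < r) Hs i = H)
  (capL : \bigcap_(i < r) Ls i \subset K) :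
  exists i : 'I_r, S \subset Eset G (Hs i) :&: Eset G (Ls i).
Proof.
case: hS => v ->{S}.
set E := Eset G H :&: Eset G K.
case: (boolP [exists i : 'I_r, component_edges E v \subset Eset G (Hs i) :&: Eset G (Ls i)]).
  by case/existsP => i hi; exists i.
rewrite negb_exists => /forallP hno; exfalso.
have [x xG x1] : exists2 x, x \in G & x != 1%g by apply/trivgPn; case/simpleP: Gsimple.
have HHs i : H \subset Hs i by rewrite -capH; apply: bigcap_inf.
have symE : symmetric (gadj E) by move=> u w; rewrite /gadj setUC.
have allfree i f : Ls i = Stab k n G f -> forall w : 'I_k, connect (gadj E) v w -> freeV G f w.
  move=> Lf w vw.
  case/subsetPn: (hno i) => e eS heno.
  move: eS; rewrite inE => /andP [eE esub].
  have eE' := eE; move: eE'; rewrite inE => /andP [/EsetP [p [q [Ee hq hr0]]] eK].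
  have hpk : p.+1 < k by rewrite -hq ltn_ord.
  have [b1 b2 b12 b0 b3] := bnds hpk.
  have hLne : restr2 (Ls i) (2 * p).+1 (2 * p).+2 != diag2 G.
    apply: contra heno => /eqP hL; rewrite Ee inE; apply/andP; split; last exact: mkE.
    apply: mkE => //; apply/eqP; rewrite eqEsubset; apply/andP; split.
      by rewrite -hL; apply: restr2S.
    by rewrite -hr0; apply: restr2S.
  have HL : H \subset Stab k n G f by rewrite -Lf; apply: subset_trans (HHs i) (HLs i).
  have sub : is_subgroup (Stab k n G f) by rewrite -Lf.
  rewrite Lf in hLne.
  have [fp _] := transfer hpk Gsimple hr0 HL sub hLne.
  have pc : connect (gadj E) v p.
    by move/subsetP: esub => /(_ p); rewrite Ee set21 inE; apply.
  have pv : connect (gadj E) p v by rewrite (sym_connect_sym symE).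
  exact: (propag Gsimple xG x1 HL sub fp (connect_trans pv vw)).
pose i0 : 'I_r := Ordinal hr.
case/subsetPn: (hno i0) => e eS _.
move: eS; rewrite inE => /andP [eE esub]; move: eE; rewrite inE => /andP [/EsetP [p [q [Ee hq hr']]] eK].
rewrite Ee in eK; have hK := Eset_uniq hq eK.
have hpk : p.+1 < k by rewrite -hq ltn_ord.
have [b1 b2 b12 b0 b3] := bnds hpk.
have pc : connect (gadj E) v p.
  by move/subsetP: esub => /(_ p); rewrite Ee set21 inE; apply.
have delK : del k (2 * p).+1 x \in K.
  apply: (subsetP capL); apply/bigcapP => i _.
  case: (LN i) => f Lf; rewrite Lf.
  apply: (free_del (j := p)) (allfree i f Lf p pc) _ _ _ xG => //.
  by rewrite eqxx orbT.
rewrite (@del_tp n k _ ((2 * p).+2) x b12) -restr2P // hK in delK.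
case/imsetP: delK => z _ [e1 e2].
by move: x1; rewrite e1 e2 eqxx.
Qed.
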